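(* Assume the network is regular, and let $\alpha,\beta\in\mathcal E\sqcup\mathcal M$. (i) If $m\in\mathcal M$ and $j\in\mathcal E$ satisfy $\alpha\leadsto m$, $m\vdash j$, and $j\leadsto\beta$, then $\alpha\leadsto\beta$. (ii) If $j\in\mathcal E$ satisfies $\alpha\leadsto j$ and $j\leadsto\beta$, then $\alpha\leadsto\beta$. In particular, for reactions $j^*,j,j'\in\mathcal E$, $j^*\leadsto j\leadsto j'$ implies $j^*\leadsto j'$.
   Context: A reaction network consists of a finite set of metabolites $\mathcal M=\{1,\dots,M\}$ and a finite set of reactions $\mathcal E=\{1,\dots,E\}$. Each reaction $j$ has an input stoichiometric vector $y^j\in\mathbb R_{\ge0}^M$ and an output stoichiometric vector $\bar y^j\in\mathbb R_{\ge0}^M$. Write $m\vdash j$ iff $y^j_m\neq 0$. The stoichiometric matrix $S$ is the real $M\times E$ matrix whose $j$-th column is $S^j=\bar y^j-y^j$; it is assumed to have full rank $M$. The rate matrix $R=(r_{jm})$ is the $E\times M$ matrix whose entries $r_{jm}$ with $m\vdash j$ are independent indeterminates, and $r_{jm}=0$ whenever $m\not\vdash j$. ''Nonzero algebraically'' means nonzero as a polynomial/rational function in these indeterminates. The network is regular if $\det(SR)\ne0$ algebraically. Let $B=\begin{pmatrix}-\mathrm{id}_{\mathcal E}&R\\ S&0\end{pmatrix}$, a square matrix with rows and columns indexed by the disjoint union $\mathcal E\sqcup\mathcal M$; for a regular network it is invertible over the field of rational functions in the $r_{jm}$. For $\alpha\in\mathcal E\sqcup\mathcal M$ set $z^\alpha=-B^{-1}e_\alpha$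 (for $\alpha=m^*\in\mathcal M$ this is the response to an external feed of metabolite $m^*$), and write $\alpha\leadsto\beta$ for $\beta\in\mathcal E\sqcup\mathcal M$ if the component $z^\alpha_\beta$ is nonzero algebraically. *)

(* Defs.v *)
From HB Require Import structures.
From mathcomp Require Import all_boot all_order all_algebra fraction.
Set Implicit Arguments. Unset Strict Implicit. Unset Printing Implicit Defensive.
Import Order.TTheory GRing.Theory Num.Theory.
Local Open Scope ring_scope.

(* Polynomial ring in n indeterminates over R, built as iterated univariate
   polynomials:  mpoly R 0 = R, mpoly R n.+1 = (mpoly R n)[X_n]. *)
Fixpoint mpoly (R : idomainType) (n : nat) : idomainType :=
  if n is n'.+1 then [the idomainType of {poly (mpoly R n')}] else R.

(* the k-th indeterminate X_k in mpoly R n (for k < n) *)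
Fixpoint mvar (R : idomainType) (n k : nat) : mpoly R n :=
  match n return mpoly R n with
  | 0 => 0
  | n'.+1 => if k == n' then ('X : {poly mpoly R n'}) else (mvar R n' k)%:P
  end.

Fixpoint mcst (R : idomainType) (n : nat) (c : R) : mpoly R n :=
  match n return mpoly R n with
  | 0 => c
  | n'.+1 => (mcst n' c)%:P
  end.

Definition ratfun (R : idomainType) (n : nat) : fieldType := {fraction (mpoly R n)}.

Section Network.
Variables (R : realFieldType) (E M : nat).
Variables (y ybar : 'I_E -> 'I_M -> R).

Definition enters (m : 'I_M) (j : 'I_E) : bool := y j m != 0.

Definition stoich : 'M[R]_(M, E) := \matrix_(m, j) (ybar j m - y j m).

(* the field of rational functions in the indeterminates r_jm
   (indeterminate r_jm is X_(j*M+m); those with not m |- j are unused) *)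
Definition RF : fieldType := ratfun R (E * M).

Definition stoichF : 'M[RF]_(M, E) :=
  map_mx (fun c => tofrac (mcst (E * M) c)) stoich.

Definition rateF : 'M[RF]_(E, M) :=
  \matrix_(j, m) (if enters m j then tofrac (mvar R (E * M) (j * M + m)) else 0).

Definition regular : Prop := \det (stoichF *m rateF) != 0.

(* B, rows and columns indexed by E ⊔ M  ~  'I_(E + M)  (E first) *)
Definition Bmat : 'M[RF]_(E + M) :=
  block_mx (- 1%:M) rateF stoichF 0.

Definition zresp (alpha : 'I_(E + M)) : 'cV[RF]_(E + M) :=
  - (invmx Bmat *m delta_mx alpha 0).

(* alpha ~> beta  iff  z^alpha_beta nonzero algebraically *)
Definition leadsto (alpha beta : 'I_(E + M)) : bool := zresp alpha beta 0 != 0.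

End Network.

(* Main.v *)
Require Import Defs.
From HB Require Import structures.
From mathcomp Require Import all_boot all_order all_algebra fraction.
Import Order.TTheory GRing.Theory Num.Theory.
Local Open Scope ring_scope.

Fixpoint mder (R : idomainType) (n k : nat) : mpoly R n -> mpoly R n :=
  match n return mpoly R n -> mpoly R n with
  | 0 => fun _ => 0
  | n'.+1 => fun p : {poly mpoly R n'} =>
      if k == n' then deriv p else map_poly (mder R n' k) p
  end.

Section D.
Variable R : idomainType.

Lemma mder_props n k :
  mder R n k 0 = 0 /\ mder R n k 1 = 0 /\
  (forall p q, mder R n k (p + q) = mder R n k p + mder R n k q) /\
  (forall p q, mder R n k (p * q) = mder R n k p * q + p * mder R n k q).
Proof.
elim: n => [|n [D0 [D1 [DD DM]]]] /=.
  by split=> //; split=> //; split=> *; rewrite ?addr0 ?mulr0 ?mul0r ?addr0.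
case: eqP => _.
  split; first exact: deriv0.
  split; first exact: derivC.
  by split=> p q; [exact: derivD | exact: derivM].
split; first by rewrite map_poly0.
split. apply/polyP=> i; rewrite coef_map_id0 // !coefC; case: eqP => _; rewrite ?D1 ?D0 //.
split=> p q; apply/polyP=> i.
  by rewrite coef_map_id0 // !coefD !coef_map_id0 // DD.
rewrite coefD !coef_map_id0 // !coefM (big_morph _ DD D0) -big_split /=.
by apply: eq_bigr => l _; rewrite DM !coef_map_id0.
Qed.
End D.

Lemma mder0 (R : idomainType) n k : mder R n k 0 = 0.
Proof. by case: (mder_props R n k). Qed.
Lemma mder1 (R : idomainType) n k : mder R n k 1 = 0.
Proof. by case: (mder_props R n k) => _ []. Qed.
Lemma mderD (R : idomainType) n k p q : mder R n k (p + q) = mder R n k p + mder R n k q.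
Proof. by case: (mder_props R n k) => _ [] _ []. Qed.
Lemma mderM (R : idomainType) n k p q : mder R n k (p * q) = mder R n k p * q + p * mder R n k q.
Proof. by case: (mder_props R n k) => _ [] _ []. Qed.
Lemma mderN (R : idomainType) n k p : mder R n k (- p) = - mder R n k p.
Proof.
apply/eqP; rewrite -subr_eq0 opprK -mderD addrC subrr; exact/eqP/mder0.
Qed.

Lemma mder_cst (R : idomainType) n k c : mder R n k (mcst n c) = 0.
Proof.
elim: n => [|n IH] //=; case: eqP => _; first exact: derivC.
apply/polyP=> i; rewrite coef_map_id0 ?mder0 // !coefC; case: eqP => _ //.
exact: mder0.
Qed.

Lemma mder_var (R : idomainType) n k l : (k < n)%N ->
  mder R n k (mvar R n l) = (l == k)%:R.
Proof.
elim: n => [|n IH] // kn /=; case: eqP => [->|nk].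
  by case: (l == n); rewrite ?derivX ?derivC.
have kn' : (k < n)%N by rewrite ltnS leq_eqVlt in kn; case/orP: kn => // /eqP.
case: eqP => [ln|nl].
  have -> : (l == k) = false by apply/eqP => e; apply: nk; rewrite -e.
  apply/polyP=> i; rewrite coef_map_id0 ?mder0 // coefX coef0.
  by case: eqP => _; rewrite ?mder1 ?mder0.
apply/polyP=> i; rewrite coef_map_id0 ?mder0 // !coefC.
case: eqP => [->|ni]; last by rewrite mder0; case: (l == k); rewrite ?coef1 ?coef0 //; case: eqP.
by rewrite IH //; case: (l == k); rewrite ?coef1 ?coef0.
Qed.
Lemma mul_delta_entry (T : comRingType) p (A : 'M[T]_p) j m b a :
  (A *m delta_mx j m *m A) b a = A b j * A m a.
Proof.
rewrite mxE (bigD1 m) //= big1 ?addr0 => [|l /negbTE nl].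
  rewrite mxE (bigD1 j) //= big1 ?addr0 => [|k /negbTE nk]; last by rewrite mxE nk mulr0.
  by rewrite mxE !eqxx mulr1.
rewrite mxE big1 ?mul0r // => k _; by rewrite mxE nl andbF mulr0.
Qed.

Section Main.
Variables (R : realFieldType) (E M : nat) (y ybar : 'I_E -> 'I_M -> R).
Local Notation P := (mpoly R (E * M)).

Definition rateP : 'M[P]_(E, M) :=
  \matrix_(j, m) (if enters y m j then mvar R (E * M) (j * M + m) else 0).
Definition stoichP : 'M[P]_(M, E) := map_mx (mcst (E * M)) (stoich y ybar).
Definition Bp : 'M[P]_(E + M) := block_mx (-1%:M) rateP stoichP 0.

Lemma BmatE : Bmat y ybar = map_mx (@tofrac P) Bp.
Proof.
rewrite /Bmat /Bp map_block_mx map_mxN map_scalar_mx rmorph1 map_mx0.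
congr block_mx; apply/matrixP=> i j; rewrite !mxE //.
by case: ifP; rewrite ?rmorph0.
Qed.

Lemma unitB : regular y ybar -> Bmat y ybar \in unitmx.
Proof.
move=> hreg.
have -> : Bmat y ybar = block_mx 1%:M 0 (- stoichF y ybar) 1%:M *m
   block_mx (-1%:M) (rateF y) 0 (stoichF y ybar *m rateF y).
  rewrite mulmx_block !mul1mx !mul0mx ?mulmx0 !addr0 !mulNmx mulmxN mulmx1 opprK addNr.
  by [].
rewrite unitmxE det_mulmx det_lblock det_ublock !det1 !mul1r unitfE.
rewrite mulf_neq0 // -scaleN1r detZ det1 mulr1 expf_neq0 // oppr_eq0 oner_eq0 //=.
Qed.


Lemma leadstoE a b : regular y ybar -> leadsto y ybar a b = (\adj Bp b a != 0).
Proof.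
move=> hreg; rewrite /leadsto /zresp mxE oppr_eq0.
rewrite mxE (bigD1 a) //= big1 ?addr0 => [|k /negbTE nk]; last first.
  by rewrite mxE nk mulr0.
rewrite mxE !eqxx mulr1 /invmx unitB // mxE mulf_eq0 invr_eq0.
have /negbTE -> : \det (Bmat y ybar) != 0 by rewrite -unitfE -unitmxE unitB.
by rewrite /= BmatE -map_mx_adj mxE tofrac_eq0.
Qed.

Lemma map_mx_derM k p q r (A : 'M[P]_(p, q)) (B : 'M[P]_(q, r)) :
  map_mx (mder R (E * M) k) (A *m B) =
  map_mx (mder R (E * M) k) A *m B + A *m map_mx (mder R (E * M) k) B.
Proof.
apply/matrixP=> i j; rewrite !mxE (big_morph _ (mderD _ _ _) (mder0 _ _ _)) -big_split.
by apply: eq_bigr => l _; rewrite mderM !mxE.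
Qed.

Lemma map_mx_derS k p a :
  map_mx (mder R (E * M) k) (a%:M : 'M[P]_p) = (mder R (E * M) k a)%:M.
Proof. by apply/matrixP=> i j; rewrite !mxE; case: (i == j); rewrite ?mulr1n ?mulr0n ?mder0. Qed.

Lemma idx_eq (i j : 'I_E) (l m : 'I_M) :
  (i * M + l == j * M + m)%N = (i == j) && (l == m).
Proof.
apply/eqP/andP => [h|[/eqP -> /eqP ->]] //.
have M0 : (0 < M)%N := leq_ltn_trans (leq0n l) (ltn_ord l).
have hi : i = j :> nat.
  have := congr1 (fun x => x %/ M)%N h; rewrite /= !divnMDl // !divn_small ?ltn_ord //.
  by rewrite !addn0.
by split; apply/eqP/val_inj => //=; move: h; rewrite hi => /addnI.
Qed.

Lemma DBp (j : 'I_E) (m : 'I_M) : enters y m j ->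
  map_mx (mder R (E * M) (j * M + m)) Bp = delta_mx (lshift M j) (rshift E m).
Proof.
move=> ejm.
have ltk : (j * M + m < E * M)%N.
  have : (j * M + m < j * M + M)%N by rewrite ltn_add2l ltn_ord.
  move/leq_trans; apply; by rewrite -mulSnr leq_mul2r ltn_ord orbT.
apply/matrixP => i l; rewrite mxE.
case: (split_ordP i) => i' ->; case: (split_ordP l) => l' ->;
  rewrite ?block_mxEul ?block_mxEur ?block_mxEdl ?block_mxEdr !mxE
          ?eq_lshift ?eq_rshift ?eq_lrshift ?eq_rlshift /= ?mder0 ?mder_cst //.
- by rewrite andbF mderN; case: (_ == _); rewrite ?mulr1n ?mulr0n ?mder1 ?mder0 ?oppr0.
- case: ifP => e; first by rewrite mder_var // idx_eq.
  rewrite mder0; case: eqP => // ei; case: eqP => // el.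
  by move: e; rewrite ei el ejm.
Qed.

Lemma key1 (j : 'I_E) (m : 'I_M) a b : enters y m j ->
  \adj Bp (rshift E m) a != 0 -> \adj Bp b (lshift M j) != 0 -> \adj Bp b a != 0.
Proof.
move=> ejm h1 h2; apply/negP => /eqP hba.

have h := map_mx_derM (j * M + m) _ _ _ (\adj Bp) Bp.
rewrite mul_adj_mx map_mx_derS DBp // in h.
have h3 := congr1 (fun X => X *m \adj Bp) h.
rewrite /= mulmxDl -mulmxA mul_mx_adj mul_scalar_mx mul_mx_scalar in h3.
move/matrixP/(_ b a): h3 => h4.
have eL : forall c (X : 'M[P]_(E + M)), (c *: X) b a = c * X b a by move=> c X; rewrite !mxE.
have eD : forall (X Y : 'M[P]_(E + M)), (X + Y) b a = X b a + Y b a by move=> X Y; rewrite !mxE.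
have eM : (map_mx (mder R (E * M) (j * M + m)) (\adj Bp)) b a = mder R (E * M) (j * M + m) (\adj Bp b a) by rewrite !mxE.
rewrite eD !eL eM mul_delta_entry hba mulr0 mder0 mulr0 add0r in h4.
by move/eqP: h4; rewrite eq_sym mulf_eq0 (negbTE h1) (negbTE h2).
Qed.

Lemma key2 (j : 'I_E) a b :
  \adj Bp (lshift M j) a != 0 -> \adj Bp b (lshift M j) != 0 -> \adj Bp b a != 0.
Proof.
move=> h1 h2; have [<- //|na] := eqVneq (lshift M j) a.
move/matrixP/(_ (lshift M j) a): (mul_mx_adj Bp).
rewrite [X in _ = X]mxE (negbTE na) mulr0n [X in X = _]mxE big_split_ord /= => h.
have eN : forall i i' : 'I_E, (- (1%:M : 'M[P]_E)) i i' = - (i == i')%:R.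
  by move=> i i'; rewrite !mxE.
rewrite (bigD1 j) //= big1 ?addr0 in h => [|i /negbTE ni]; last first.
  by rewrite block_mxEul eN eq_sym ni oppr0 mul0r.
rewrite block_mxEul eN eqxx mulN1r in h.
have hs : \sum_(l < M) Bp (lshift M j) (rshift E l) * \adj Bp (rshift E l) a != 0.
  by move/eqP: h; rewrite addrC subr_eq0 => /eqP ->.
case: (pickP (fun l => Bp (lshift M j) (rshift E l) * \adj Bp (rshift E l) a != 0))
  => [l /= Hl|H0]; last first.
  by move: hs; rewrite big1 ?eqxx // => l _; apply/eqP; move: (H0 l) => /= /negbFE.
move: Hl; rewrite mulf_eq0 negb_or => /andP [Hr Ha].
apply: (@key1 j l a b) => //.
move: Hr; rewrite block_mxEur mxE; case: (enters y l j) => //; by rewrite eqxx.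
Qed.
End Main.

Theorem theorem2p4 (R : realFieldType) (E M : nat) (y ybar : 'I_E -> 'I_M -> R)
  (hy : forall j m, 0 <= y j m) (hybar : forall j m, 0 <= ybar j m)
  (hrank : \rank (stoich y ybar) = M)
  (hreg : regular y ybar)
  (alpha beta : 'I_(E + M)) :
  (forall (m : 'I_M) (j : 'I_E),
      leadsto y ybar alpha (rshift E m) -> enters y m j ->
      leadsto y ybar (lshift M j) beta -> leadsto y ybar alpha beta)
  /\ (forall j : 'I_E,
      leadsto y ybar alpha (lshift M j) -> leadsto y ybar (lshift M j) beta ->
      leadsto y ybar alpha beta)
  /\ (forall js j j' : 'I_E,
      leadsto y ybar (lshift M js) (lshift M j) ->
      leadsto y ybar (lshift M j) (lshift M j') ->
      leadsto y ybar (lshift M js) (lshift M j')).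
Proof.
split; [|split].
- move=> m j; rewrite !leadstoE // => h1 e h2; exact: key1 e h1 h2.
- move=> j; rewrite !leadstoE // => h1 h2; exact: key2 h1 h2.
- move=> js j j'; rewrite !leadstoE // => h1 h2; exact: key2 h1 h2.
Qed.
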